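(* Let $k\ge1$, let $\theta_1,\dots,\theta_{k+1}\in[-\frac{\pi}{2},\frac{\pi}{2}]$ be pairwise distinct, $\theta_{\min}=\min_{p\ne j}|\theta_p-\theta_j|$, and $a=(a_1,\dots,a_{k+1})^T\in\mathbb C^{k+1}$ with $|a_j|\ge m_{\min}>0$ for all $j$. Let $A=(\phi_{2k}(e^{i\theta_1}),\dots,\phi_{2k}(e^{i\theta_{k+1}}))$. For $q\le k$ and $\hat\theta_1,\dots,\hat\theta_q\in\mathbb R$, $\hat a(q)=(\hat a_1,\dots,\hat a_q)^T\in\mathbb C^q$, let $\hat A(q)=(\phi_{2k}(e^{i\hat\theta_1}),\dots,\phi_{2k}(e^{i\hat\theta_q}))$. Then $$\min_{\hat a_p\in\mathbb C,\ \hat\theta_p\in\mathbb R,\ p=1,\dots,q}\|\hat A(q)\hat a(q)-Aa\|_2\ge\frac{\zeta(k+1)\,\xi(k)\,m_{\min}\,\theta_{\min}^{2k}}{\pi^{2k}}.$$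
   Context: $\phi_s(z)=(1,z,\dots,z^s)^T$. For an integer $k\ge1$: $\zeta(k)=\big((\tfrac{k-1}{2})!\big)^2$ if $k$ is odd, $\zeta(k)=(\tfrac{k}{2})!(\tfrac{k-2}{2})!$ if $k$ is even; $\xi(1)=\frac12$, $\xi(k)=\frac{(\frac{k-1}{2})!(\frac{k-3}{2})!}{4}$ if $k\ge3$ is odd, $\xi(k)=\frac{((\frac{k-2}{2})!)^2}{4}$ if $k$ is even. *)

(* Defs.v *)
From Stdlib Require Import Reals Lra Lia Arith.
Open Scope R_scope.

(* Complex numbers as (real part, imaginary part). *)
Definition Cpx : Type := (R * R)%type.
Definition Cadd (z w : Cpx) : Cpx := (fst z + fst w, snd z + snd w).
Definition Copp (z : Cpx) : Cpx := (- fst z, - snd z).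
Definition Cmul (z w : Cpx) : Cpx :=
  (fst z * fst w - snd z * snd w, fst z * snd w + snd z * fst w).
Definition C0 : Cpx := (0, 0).
Definition C1 : Cpx := (1, 0).
Definition Cmod (z : Cpx) : R := sqrt (fst z ^ 2 + snd z ^ 2).
Fixpoint Cpow (z : Cpx) (n : nat) : Cpx :=
  match n with O => C1 | S n => Cmul z (Cpow z n) end.
Definition Cexpi (t : R) : Cpx := (cos t, sin t).

Fixpoint Rsum (n : nat) (f : nat -> R) : R :=
  match n with O => 0 | S n => Rsum n f + f n end.
Fixpoint Csum (n : nat) (f : nat -> Cpx) : Cpx :=
  match n with O => C0 | S n => Cadd (Csum n f) (f n) end.

(* phi_s(z) = (1, z, ..., z^s)^T : entry l (0 <= l <= s) is z^l *)
Definition phi (s : nat) (z : Cpx) (l : nat) : Cpx := Cpow z l.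

(* (M c)_l where M = (phi_s(e^{i t_0}), ..., phi_s(e^{i t_{n-1}})) and c in Cpx^n *)
Definition mat_vec (s n : nat) (t : nat -> R) (c : nat -> Cpx) (l : nat) : Cpx :=
  Csum n (fun j => Cmul (phi s (Cexpi (t j)) l) (c j)).

Definition norm2 (s : nat) (v : nat -> Cpx) : R :=
  sqrt (Rsum (S s) (fun l => Cmod (v l) ^ 2)).

Definition zeta (k : nat) : R :=
  if Nat.odd k then INR (fact ((k - 1) / 2)) ^ 2
  else INR (fact (k / 2)) * INR (fact ((k - 2) / 2)).

Definition xi (k : nat) : R :=
  if Nat.eqb k 1 then 1 / 2
  else if Nat.odd k then INR (fact ((k - 1) / 2)) * INR (fact ((k - 3) / 2)) / 4
  else INR (fact ((k - 2) / 2)) ^ 2 / 4.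

(* Main.v *)
From Stdlib Require Import Reals Lra Lia Arith List ZArith Classical.
From Coquelicot Require Import Coquelicot.
Require Import Defs.
Open Scope R_scope.

Notation CM := Coquelicot.Complex.Cmod.


Lemma jordan (y : R) : 0 <= y <= PI / 2 -> 2 * y / PI <= sin y.
Proof.
  intros [H0 H1].
  pose proof PI_4 as P4. pose proof PI2_1 as P1.
  assert (Hpi : 0 < PI) by lra.
  destruct (Rle_dec (PI/2 - y) (4/PI)) as [Hu|Hu].
  - rewrite <- cos_shift. set (u := PI/2 - y).
    assert (Hu0 : 0 <= u <= PI/2) by (unfold u; lra).
    destruct (COS u) as [Hc _]; try lra.
    assert (E : cos_lb u = 1 - u^2/2 + u^4/24 - u^6/720).
    { unfold cos_lb, cos_approx, cos_term. simpl. field. }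
    rewrite E in Hc.
    assert (u <= 2) by lra.
    assert (u^4/24 - u^6/720 >= 0).
    { assert (0 <= u^4) by (apply pow_le; lra).
      replace (u^4/24 - u^6/720) with (u^4 * (30 - u^2) / 720) by field.
      assert (u^2 <= 4) by nra. apply Rle_ge. apply Rmult_le_pos; [|lra]. apply Rmult_le_pos; lra. }
    assert (2 * y / PI = 1 - 2 * u / PI) by (unfold u; field; lra).
    assert (u * PI <= 4).
    { assert (E4 : 4/PI*PI = 4) by (field; lra). rewrite <- E4. apply Rmult_le_compat_r. lra. unfold u; lra. }
    assert (u^2/2 <= 2*u/PI).
    { apply (Rmult_le_reg_r PI); [lra|].
      replace (2 * u / PI * PI) with (2*u) by (field; lra). nra. }
    lra.
  - destruct (SIN y) as [Hs _]; try lra.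
    assert (E : sin_lb y = y - y^3/6 + y^5/120 - y^7/5040).
    { unfold sin_lb, sin_approx, sin_term. simpl. field. }
    rewrite E in Hs.
    assert (Hpp : 8 < PI * PI).
    { assert (4 / PI * PI = 4) by (field; lra).
      assert (4/PI < PI/2) by lra. nra. }
    assert (HPI : 2 * PI > 5) by nra.
    assert (Hy1 : y <= 1).
    { assert (4 / PI >= 1). { apply Rle_ge. apply (Rmult_le_reg_r PI); [lra|].
        replace (4/PI*PI) with 4 by (field; lra). lra. } lra. }
    assert (y^5/120 - y^7/5040 >= 0).
    { assert (0 <= y^5) by (apply pow_le; lra).
      replace (y^5/120 - y^7/5040) with (y^5 * (42 - y^2) / 5040) by field.
      assert (y^2 <= 1) by nra. apply Rle_ge. apply Rmult_le_pos; [|lra]. apply Rmult_le_pos; lra. }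
    assert (2 * y / PI <= y - y^3/6).
    { assert (2 / PI <= 5/6).
      { apply (Rmult_le_reg_r PI); [lra|]. replace (2/PI*PI) with 2 by (field; lra). lra. }
      replace (2*y/PI) with (y * (2/PI)) by (field; lra).
      replace (y - y^3/6) with (y * (1 - y^2/6)) by field.
      apply Rmult_le_compat_l; [lra|]. nra. }
    lra.
Qed.

Lemma chord_eq (a b : R) : CM (Cexpi a - Cexpi b)%C = 2 * Rabs (sin ((a - b) / 2)).
Proof.
  unfold CM, Cexpi, Cminus, Cplus, Copp; simpl.
  assert (E : (cos a + - cos b) * ((cos a + - cos b) * 1) + (sin a + - sin b) * ((sin a + - sin b) * 1)
             = (2 * sin ((a-b)/2))²).
  {
    pose proof (cos_minus a b) as Hm.
    pose proof (cos_2a_sin ((a-b)/2)) as H2.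
    replace (2 * ((a - b) / 2)) with (a - b) in H2 by field.
    pose proof (sin2_cos2 a). pose proof (sin2_cos2 b).
    unfold Rsqr in *. nra. }
  rewrite E, sqrt_Rsqr_abs, Rabs_mult, Rabs_right; lra.
Qed.

Lemma chord_lb (a b : R) : Rabs (a - b) <= PI ->
  2 * Rabs (a - b) / PI <= CM (Cexpi a - Cexpi b)%C.
Proof.
  intros H. rewrite chord_eq.
  pose proof PI2_1.
  assert (Rabs (sin ((a - b) / 2)) = sin (Rabs (a - b) / 2)).
  { destruct (Rle_dec 0 (a - b)).
    - rewrite (Rabs_right (a - b)) by lra. rewrite Rabs_right; auto.
      rewrite Rabs_right in H by lra. apply Rle_ge, sin_ge_0; lra.
    - rewrite (Rabs_left (a - b)) by lra. rewrite Rabs_left1.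
      + replace (- (a - b) / 2) with (- ((a-b)/2)) by field. rewrite sin_neg. auto.
      + rewrite Rabs_left in H by lra.
        replace ((a-b)/2) with (- (-(a-b)/2)) by field. rewrite sin_neg.
        assert (0 <= sin (- (a - b) / 2)) by (apply sin_ge_0; lra). lra. }
  rewrite H1.
  pose proof (jordan (Rabs (a - b) / 2)).
  assert (0 <= Rabs (a-b)) by apply Rabs_pos.
  assert (2 * (Rabs (a - b) / 2) / PI <= sin (Rabs (a - b) / 2)) by (apply H2; lra).
  replace (2 * Rabs (a - b) / PI) with (2 * (2 * (Rabs (a - b) / 2) / PI)) by (field; lra).
  lra.
Qed.


Fixpoint Cprod (n : nat) (f : nat -> C) : C :=
  match n with O => 1%C | S n => (Cprod n f * f n)%C end.
Fixpoint Rprod (n : nat) (f : nat -> R) : R :=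
  match n with O => 1 | S n => Rprod n f * f n end.

Lemma Csum_S n (f : nat -> C) : (Csum (S n) f : C) = (Csum n f + f n)%C.
Proof. reflexivity. Qed.
Lemma Csum_0 (f : nat -> C) : (Csum 0 f : C) = 0%C.
Proof. reflexivity. Qed.

Lemma Csum_ext n (f g : nat -> C) : (forall i, (i < n)%nat -> f i = g i) -> Csum n f = Csum n g.
Proof.
  induction n; intros H; [reflexivity|]. rewrite !Csum_S, IHn, H; auto; intros; apply H; lia.
Qed.

Lemma Csum_lin n (f g : nat -> C) c :
  (Csum n (fun j => f j - c * g j)%C : C) = (Csum n f - c * Csum n g)%C.
Proof.
  induction n; [rewrite !Csum_0; ring|]. rewrite !Csum_S, IHn. ring.
Qed.

Lemma Csum_sub n (f g : nat -> C) :
  (Csum n (fun j => f j - g j)%C : C) = (Csum n f - Csum n g)%C.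
Proof.
  induction n; [rewrite !Csum_0; ring|]. rewrite !Csum_S, IHn. ring.
Qed.

Lemma Csum_zero n (f : nat -> C) : (forall i, (i < n)%nat -> f i = 0%C) -> (Csum n f : C) = 0%C.
Proof.
  induction n; intros H; [reflexivity|]. rewrite Csum_S, IHn, H; try lia. ring.
  intros; apply H; lia.
Qed.

Lemma Csum_single n (f : nat -> C) j0 : (j0 < n)%nat -> (forall i, (i < n)%nat -> i <> j0 -> f i = 0%C) ->
  (Csum n f : C) = f j0.
Proof.
  induction n; intros Hj H; [lia|]. rewrite Csum_S.
  destruct (Nat.eq_dec j0 n) as [->|Hne].
  - rewrite Csum_zero; [ring|]. intros; apply H; lia.
  - rewrite IHn; [| lia | intros; apply H; lia]. rewrite (H n) by lia. ring.
Qed.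

Lemma Rsum_S n f : Rsum (S n) f = Rsum n f + f n.
Proof. reflexivity. Qed.

Lemma Cmod_Csum_le n (f : nat -> C) : CM (Csum n f) <= Rsum n (fun i => CM (f i)).
Proof.
  induction n; simpl.
  - change (CM 0%C <= 0). rewrite Cmod_0. lra.
  - change (CM (Csum n f + f n)%C <= Rsum n (fun i => CM (f i)) + CM (f n)).
    eapply Rle_trans; [apply Cmod_triangle|]. lra.
Qed.

Lemma Rsum_lt n f b : (0 < n)%nat -> (forall i, (i < n)%nat -> f i < b) -> Rsum n f < INR n * b.
Proof.
  induction n; intros Hn H; [lia|]. rewrite Rsum_S, S_INR.
  destruct n.
  - simpl. specialize (H 0%nat ltac:(lia)). lra.
  - assert (Rsum (S n) f < INR (S n) * b) by (apply IHn; [lia| intros; apply H; lia]).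
    specialize (H (S n) ltac:(lia)). lra.
Qed.

Lemma Rsum_ge_term n f i : (forall j, (j < n)%nat -> 0 <= f j) -> (i < n)%nat -> f i <= Rsum n f.
Proof.
  induction n; intros H Hi; [lia|]. rewrite Rsum_S.
  assert (0 <= Rsum n f).
  { clear IHn Hi. induction n; simpl; [lra|].
    assert (0 <= f n) by (apply H; lia). assert (0 <= Rsum n f) by (apply IHn; intros; apply H; lia). lra. }
  destruct (Nat.eq_dec i n) as [->|Hne].
  - lra.
  - assert (f i <= Rsum n f) by (apply IHn; [intros; apply H; lia| lia]).
    assert (0 <= f n) by (apply H; lia). lra.
Qed.

Lemma Cprod_S n (f : nat -> C) : Cprod (S n) f = (Cprod n f * f n)%C.
Proof. reflexivity. Qed.

Lemma Cprod_ext n (f g : nat -> C) : (forall i, (i < n)%nat -> f i = g i) -> Cprod n f = Cprod n g.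
Proof.
  induction n; intros H; [reflexivity|]. rewrite !Cprod_S, IHn, H; auto; intros; apply H; lia.
Qed.

Lemma Rprod_ext n f g : (forall i, (i < n)%nat -> f i = g i) -> Rprod n f = Rprod n g.
Proof.
  induction n; intros H; [reflexivity|]. simpl. rewrite IHn, H; auto; intros; apply H; lia.
Qed.

Lemma Cmod_Cprod n (f : nat -> C) : CM (Cprod n f) = Rprod n (fun i => CM (f i)).
Proof.
  induction n; simpl.
  - apply Cmod_1.
  - change (CM (Cprod n f * f n)%C = Rprod n (fun i => CM (f i)) * CM (f n)).
    rewrite Cmod_mult, IHn. reflexivity.
Qed.

Lemma Cprod_neq0 n (f : nat -> C) : (forall i, (i < n)%nat -> f i <> 0%C) -> Cprod n f <> 0%C.
Proof.
  induction n; intros H; simpl.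
  - intro E. injection E. lra.
  - apply Cmult_neq_0; [apply IHn; intros; apply H; lia| apply H; lia].
Qed.

Lemma Rprod_nonneg n f : (forall i, (i < n)%nat -> 0 <= f i) -> 0 <= Rprod n f.
Proof.
  induction n; intros H; simpl; [lra|].
  apply Rmult_le_pos; [apply IHn; intros; apply H; lia| apply H; lia].
Qed.

Lemma Rprod_le n f g : (forall i, (i < n)%nat -> 0 <= f i <= g i) -> Rprod n f <= Rprod n g.
Proof.
  induction n; intros H; simpl; [lra|].
  apply Rmult_le_compat.
  - apply Rprod_nonneg; intros; apply H; lia.
  - apply H; lia.
  - apply IHn; intros; apply H; lia.
  - apply H; lia.
Qed.

Lemma Rprod_mult n f g : Rprod n (fun i => f i * g i) = Rprod n f * Rprod n g.
Proof. induction n; simpl; [lra|]. rewrite IHn. ring. Qed.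

Lemma Rprod_const n c : Rprod n (fun _ => c) = c ^ n.
Proof. induction n; simpl; [lra|]. rewrite IHn. ring. Qed.

Definition skip (j0 m : nat) : nat := if (m <? j0)%nat then m else S m.

Lemma skip_neq j0 m : skip j0 m <> j0.
Proof. unfold skip. destruct (Nat.ltb_spec m j0); lia. Qed.
Lemma skip_le j0 m n : (m < n)%nat -> (skip j0 m <= n)%nat.
Proof. unfold skip. destruct (Nat.ltb_spec m j0); lia. Qed.
Lemma skip_inj j0 m m' : skip j0 m = skip j0 m' -> m = m'.
Proof. unfold skip. destruct (Nat.ltb_spec m j0), (Nat.ltb_spec m' j0); lia. Qed.

Lemma Cprod_skip n j0 (f : nat -> C) : (j0 <= n)%nat ->
  Cprod n (fun m => f (skip j0 m)) =
  Cprod (S n) (fun j => if (j =? j0)%nat then 1%C else f j).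
Proof.
  induction n; intros Hj.
  - assert (j0 = 0%nat) by lia. subst. simpl. ring.
  - destruct (Nat.eq_dec j0 (S n)) as [->|Hne].
    + rewrite (Cprod_S (S n)). rewrite Nat.eqb_refl.
      rewrite Cprod_S, (Cprod_S n).
      rewrite (Cprod_ext n (fun m => f (skip (S n) m)) (fun j => if (j =? S n)%nat then 1%C else f j)).
      * unfold skip. replace (n <? S n)%nat with true by (symmetry; apply Nat.ltb_lt; lia).
        replace (n =? S n)%nat with false by (symmetry; apply Nat.eqb_neq; lia). ring.
      * intros i Hi. unfold skip. replace (i <? S n)%nat with true by (symmetry; apply Nat.ltb_lt; lia).
        replace (i =? S n)%nat with false by (symmetry; apply Nat.eqb_neq; lia). reflexivity.
    + rewrite Cprod_S, IHn by lia. rewrite (Cprod_S (S n)).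
      unfold skip at 1. replace (n <? j0)%nat with false by (symmetry; apply Nat.ltb_ge; lia).
      replace (S n =? j0)%nat with false by (symmetry; apply Nat.eqb_neq; lia). reflexivity.
Qed.

Lemma Rprod_skip n j0 f : (j0 <= n)%nat ->
  Rprod n (fun m => f (skip j0 m)) =
  Rprod (S n) (fun j => if (j =? j0)%nat then 1 else f j).
Proof.
  induction n; intros Hj.
  - assert (j0 = 0%nat) by lia. subst. simpl. ring.
  - destruct (Nat.eq_dec j0 (S n)) as [->|Hne].
    + change (Rprod (S (S n)) ?g) with (Rprod (S n) g * g (S n)). cbv beta. rewrite Nat.eqb_refl.
      rewrite (Rprod_ext (S n) (fun m => f (skip (S n) m)) (fun j => if (j =? S n)%nat then 1 else f j)).
      * ring.
      * intros i Hi. unfold skip. replace (i <? S n)%nat with true by (symmetry; apply Nat.ltb_lt; lia).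
        replace (i =? S n)%nat with false by (symmetry; apply Nat.eqb_neq; lia). reflexivity.
    + simpl Rprod at 1. rewrite IHn by lia. change (Rprod (S (S n)) ?g) with (Rprod (S n) g * g (S n)).
      unfold skip at 1. replace (n <? j0)%nat with false by (symmetry; apply Nat.ltb_ge; lia).
      replace (S n =? j0)%nat with false by (symmetry; apply Nat.eqb_neq; lia). reflexivity.
Qed.

Fixpoint Dit (r : nat -> C) (n : nat) (v : nat -> C) (l : nat) : C :=
  match n with O => v l | S n => (Dit r n v (S l) - r n * Dit r n v l)%C end.
Fixpoint Pp (r : nat -> C) (n : nat) (z : C) : C :=
  match n with O => 1%C | S n => (Pp r n z * (z - r n))%C end.

Lemma Dit_sub r n (u w : nat -> C) l :
  Dit r n (fun l => u l - w l)%C l = (Dit r n u l - Dit r n w l)%C.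
Proof.
  revert l; induction n; intros l; simpl; [reflexivity|]. rewrite !IHn. ring.
Qed.

Lemma Dit_Csum r n N (f : nat -> nat -> C) l :
  Dit r n (fun l => (Csum N (fun j => f j l) : C)) l = (Csum N (fun j => Dit r n (f j) l) : C).
Proof.
  revert l; induction n; intros l; simpl; [reflexivity|]. rewrite !IHn.
  rewrite <- Csum_lin. reflexivity.
Qed.

Lemma Cpow_S (w : C) l : (Cpow w (S l) : C) = (w * Cpow w l)%C.
Proof. reflexivity. Qed.
Lemma Cpow_0 (w : C) : (Cpow w 0 : C) = 1%C.
Proof. reflexivity. Qed.

Lemma Dit_pow r n (w c : C) l :
  Dit r n (fun l => (Cpow w l : C) * c)%C l = (Pp r n w * Cpow w l * c)%C.
Proof.
  revert l; induction n; intros l; simpl Dit; simpl Pp.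
  - ring.
  - rewrite !IHn. rewrite Cpow_S. ring.
Qed.

Lemma Cmod_sub_le (x y : C) : CM (x - y)%C <= CM x + CM y.
Proof.
  unfold Cminus. eapply Rle_trans; [apply Cmod_triangle|]. rewrite Cmod_opp. lra.
Qed.

Lemma Dit_bound r n (v : nat -> C) s M :
  (forall i, (i < n)%nat -> CM (r i) = 1) ->
  (forall l', (l' <= s)%nat -> CM (v l') <= M) ->
  forall l, (l + n <= s)%nat -> CM (Dit r n v l) <= 2 ^ n * M.
Proof.
  intros Hr Hv. induction n; intros l Hl; simpl Dit.
  - simpl. rewrite Rmult_1_l. apply Hv. lia.
  - eapply Rle_trans; [apply Cmod_sub_le|]. rewrite Cmod_mult, Hr by lia.
    assert (CM (Dit r n v (S l)) <= 2 ^ n * M) by (apply IHn; [intros; apply Hr; lia| lia]).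
    assert (CM (Dit r n v l) <= 2 ^ n * M) by (apply IHn; [intros; apply Hr; lia| lia]).
    simpl pow. lra.
Qed.

Lemma Pp_zero r n z i : (i < n)%nat -> r i = z -> Pp r n z = 0%C.
Proof.
  induction n; intros Hi E; [lia|]. simpl.
  destruct (Nat.eq_dec i n) as [->|Hne].
  - rewrite E. ring.
  - rewrite IHn; [ring|lia|exact E].
Qed.

Lemma Pp_add r n m z : Pp r (n + m) z = (Pp r n z * Pp (fun i => r (n + i)%nat) m z)%C.
Proof.
  induction m; simpl.
  - rewrite Nat.add_0_r. ring.
  - rewrite Nat.add_succ_r. simpl. rewrite IHm. ring.
Qed.

Lemma Pp_Cprod r n z : Pp r n z = Cprod n (fun i => z - r i)%C.
Proof. induction n; simpl; [reflexivity|]. rewrite IHn. reflexivity. Qed.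

Definition Dt (x : nat -> C) (n j : nat) : C :=
  Cprod (S n) (fun j' => if (j' =? j)%nat then 1%C else (x j - x j')%C).
Definition Sdd (x : nat -> C) (n : nat) (f : C -> C) : C :=
  Csum (S n) (fun j => f (x j) / Dt x n j)%C.
Definition distinct (x : nat -> C) (n : nat) : Prop :=
  forall i j, (i <= n)%nat -> (j <= n)%nat -> i <> j -> x i <> x j.

Lemma C1_neq0 : (1%C : C) <> 0%C.
Proof. intro E. injection E. lra. Qed.

Lemma Cminus_neq0 (a b : C) : a <> b -> (a - b)%C <> 0%C.
Proof. intros H E. apply H. replace a with ((a - b) + b)%C by ring. rewrite E. ring. Qed.

Lemma Dt_neq0 x n j : distinct x n -> (j <= n)%nat -> Dt x n j <> 0%C.
Proof.
  intros Hd Hj. unfold Dt. apply Cprod_neq0. intros i Hi.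
  destruct (Nat.eqb_spec i j).
  - apply C1_neq0.
  - apply Cminus_neq0. apply Hd; lia.
Qed.

Lemma Sdd_ext x n f g : (forall z, f z = g z) -> Sdd x n f = Sdd x n g.
Proof. intros H. unfold Sdd. apply Csum_ext. intros. rewrite H. reflexivity. Qed.

Lemma Sdd_lin x n f g c :
  Sdd x n (fun z => f z - c * g z)%C = (Sdd x n f - c * Sdd x n g)%C.
Proof.
  unfold Sdd. rewrite <- Csum_lin. apply Csum_ext. intros. unfold Cdiv. ring.
Qed.

Lemma Sdd_sub x n f g :
  Sdd x n (fun z => f z - g z)%C = (Sdd x n f - Sdd x n g)%C.
Proof.
  unfold Sdd. rewrite <- Csum_sub. apply Csum_ext. intros. unfold Cdiv. ring.
Qed.

Lemma Sdd_scal x n f c :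
  Sdd x n (fun z => c * f z)%C = (c * Sdd x n f)%C.
Proof.
  transitivity (Sdd x n (fun z => 0 - (- c) * f z)%C).
  - apply Sdd_ext. intros. ring.
  - rewrite Sdd_lin. unfold Sdd. rewrite (Csum_zero _ (fun j => 0 / _)%C).
    + ring.
    + intros. unfold Cdiv. ring.
Qed.

Lemma Dt_S x n j : (j <= n)%nat -> Dt x (S n) j = (Dt x n j * (x j - x (S n)))%C.
Proof.
  intros Hj. unfold Dt. rewrite (Cprod_S (S n)).
  replace (S n =? j)%nat with false by (symmetry; apply Nat.eqb_neq; lia). reflexivity.
Qed.

Lemma Sdd_L1 x n g : distinct x (S n) ->
  Sdd x (S n) (fun z => (z - x (S n)) * g z)%C = Sdd x n g.
Proof.
  intros Hd. unfold Sdd. rewrite (Csum_S (S n)).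
  replace ((x (S n) - x (S n)) * g (x (S n)) / Dt x (S n) (S n))%C with (RtoC 0) by (unfold Cdiv; ring).
  rewrite Cplus_0_r. apply Csum_ext. intros j Hj.
  rewrite Dt_S by lia.
  assert (H1: (x j - x (S n))%C <> RtoC 0) by (apply Cminus_neq0; apply Hd; lia).
  assert (H2: Dt x n j <> RtoC 0) by (apply Dt_neq0; [intros a b Ha Hb; apply Hd; lia| lia]).
  field. auto.
Qed.

Definition sw (p i : nat) : nat :=
  if (i =? p)%nat then S p else if (i =? S p)%nat then p else i.

Lemma distinct_sw x p : distinct x (S p) -> distinct (fun i => x (sw p i)) (S p).
Proof.
  intros Hd i j Hi Hj Hij. unfold sw.
  destruct (Nat.eqb_spec i p), (Nat.eqb_spec i (S p)), (Nat.eqb_spec j p), (Nat.eqb_spec j (S p));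
    apply Hd; lia.
Qed.

Lemma Sdd_swap x p f : Sdd (fun i => x (sw p i)) (S p) f = Sdd x (S p) f.
Proof.
  unfold Sdd. rewrite !(Csum_S (S p)), !(Csum_S p).
  assert (Hsp : sw p p = S p) by (unfold sw; rewrite Nat.eqb_refl; reflexivity).
  assert (Hss : sw p (S p) = p) by (unfold sw; replace (S p =? p)%nat with false
      by (symmetry; apply Nat.eqb_neq; lia); rewrite Nat.eqb_refl; reflexivity).
  assert (Hlt : forall i, (i < p)%nat -> sw p i = i).
  { intros i Hi. unfold sw. replace (i =? p)%nat with false by (symmetry; apply Nat.eqb_neq; lia).
    replace (i =? S p)%nat with false by (symmetry; apply Nat.eqb_neq; lia). reflexivity. }
  assert (Hprod : forall j, Cprod p (fun j' => if (j' =? j)%nat then 1%C else (x (sw p j) - x (sw p j'))%C)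
     = Cprod p (fun j' => if (j' =? j)%nat then 1%C else (x (sw p j) - x j')%C)).
  { intros j. apply Cprod_ext. intros i Hi. rewrite (Hlt i Hi). reflexivity. }
  rewrite (Csum_ext p (fun j => f (x (sw p j)) / Dt (fun i => x (sw p i)) (S p) j)%C
                      (fun j => f (x j) / Dt x (S p) j)%C).
  2:{ intros j Hj. unfold Dt. rewrite !(Cprod_S (S p)), !(Cprod_S p), Hprod, Hsp, Hss, (Hlt j Hj).
      replace (p =? j)%nat with false by (symmetry; apply Nat.eqb_neq; lia).
      replace (S p =? j)%nat with false by (symmetry; apply Nat.eqb_neq; lia).
      f_equal. ring. }
  unfold Dt. rewrite !(Cprod_S (S p)), !(Cprod_S p), !Hprod, Hsp, Hss.
  rewrite Nat.eqb_refl. rewrite Nat.eqb_refl.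
  replace (p =? S p)%nat with false by (symmetry; apply Nat.eqb_neq; lia).
  replace (S p =? p)%nat with false by (symmetry; apply Nat.eqb_neq; lia).
  rewrite (Cprod_ext p (fun j' => if (j' =? S p)%nat then 1%C else (x (S p) - x j')%C)
                       (fun j' => if (j' =? p)%nat then 1%C else (x (S p) - x j')%C)).
  2:{ intros i Hi. replace (i =? S p)%nat with false by (symmetry; apply Nat.eqb_neq; lia).
      replace (i =? p)%nat with false by (symmetry; apply Nat.eqb_neq; lia). reflexivity. }
  rewrite (Cprod_ext p (fun j' => if (j' =? p)%nat then 1%C else (x p - x j')%C)
                       (fun j' => if (j' =? S p)%nat then 1%C else (x p - x j')%C)).
  2:{ intros i Hi. replace (i =? S p)%nat with false by (symmetry; apply Nat.eqb_neq; lia).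
      replace (i =? p)%nat with false by (symmetry; apply Nat.eqb_neq; lia). reflexivity. }
  rewrite !Cmult_1_r.
  set (A := Csum p _). set (P1 := Cprod p _). set (P2 := Cprod p _).
  unfold Cdiv. idtac. ring.
Qed.

Lemma Sdd_0_const x : Sdd x 0 (fun _ => 1%C) = 1%C.
Proof.
  unfold Sdd, Dt. simpl. change (RtoC 0 + 1 / (1 * 1) = 1)%C. field.
Qed.

Lemma distinct_le x n m : distinct x n -> (m <= n)%nat -> distinct x m.
Proof. intros H Hm i j Hi Hj; apply H; lia. Qed.

Lemma Cmult_eq0_l (c s : C) : c <> RtoC 0 -> (c * s)%C = RtoC 0 -> s = RtoC 0.
Proof.
  intros Hc E. replace s with (/ c * (c * s))%C by (field; auto). rewrite E. ring.
Qed.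

Lemma Sdd_const x p : distinct x (S p) -> Sdd x (S p) (fun _ => 1%C) = RtoC 0.
Proof.
  revert x; induction p; intros x Hd.
  - assert (A : Sdd x 1 (fun z => (z - x 1%nat) * 1)%C = Sdd x 0 (fun _ => 1%C)) by (apply Sdd_L1; auto).
    set (x' := fun i => x (sw 0 i)).
    assert (B : Sdd x' 1 (fun z => (z - x' 1%nat) * 1)%C = Sdd x' 0 (fun _ => 1%C))
      by (apply Sdd_L1; apply distinct_sw; auto).
    unfold x' in B. rewrite Sdd_swap in B. rewrite !Sdd_0_const in A, B.
    change (x (sw 0 1)) with (x 0%nat) in B.
    assert (E : Sdd x 1 (fun z => (z - x 1%nat) * 1 - (z - x 0%nat) * 1)%C = RtoC 0)
      by (rewrite Sdd_sub, A, B; ring).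
    rewrite (Sdd_ext _ _ _ (fun z => (x 0%nat - x 1%nat) * 1)%C) in E by (intros; ring).
    rewrite Sdd_scal in E. apply Cmult_eq0_l in E; auto.
    apply Cminus_neq0. apply Hd; lia.
  - assert (A : Sdd x (S (S p)) (fun z => (z - x (S (S p))) * 1)%C = Sdd x (S p) (fun _ => 1%C)) by (apply Sdd_L1; auto).
    set (x' := fun i => x (sw (S p) i)).
    assert (Hd' : distinct x' (S (S p))) by (apply distinct_sw; auto).
    assert (B : Sdd x' (S (S p)) (fun z => (z - x' (S (S p))) * 1)%C = Sdd x' (S p) (fun _ => 1%C))
      by (apply Sdd_L1; auto).
    rewrite IHp in B by (eapply distinct_le; eauto).
    unfold x' in B. rewrite Sdd_swap in B. rewrite IHp in A by (eapply distinct_le; eauto).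
    assert (Hx : x (sw (S p) (S (S p))) = x (S p)).
    { unfold sw. replace (S (S p) =? S p)%nat with false by (symmetry; apply Nat.eqb_neq; lia).
      rewrite Nat.eqb_refl. reflexivity. }
    rewrite Hx in B.
    assert (E : Sdd x (S (S p)) (fun z => (z - x (S (S p))) * 1 - (z - x (S p)) * 1)%C = RtoC 0)
      by (rewrite Sdd_sub, A, B; ring).
    rewrite (Sdd_ext _ _ _ (fun z => (x (S p) - x (S (S p))) * 1)%C) in E by (intros; ring).
    rewrite Sdd_scal in E. apply Cmult_eq0_l in E; auto.
    apply Cminus_neq0. apply Hd; lia.
Qed.

Lemma Sdd_Pp m : forall n x c, (m <= n)%nat -> distinct x n ->
  Sdd x n (Pp c m) = if (m =? n)%nat then 1%C else RtoC 0.
Proof.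
  induction m; intros n x c Hm Hd.
  - simpl Pp. destruct n.
    + apply Sdd_0_const.
    + apply Sdd_const; auto.
  - destruct n as [|p]; [lia|].
    rewrite (Sdd_ext _ _ _ (fun z => (z - x (S p)) * Pp c m z - (c m - x (S p)) * Pp c m z)%C)
      by (intros; simpl; ring).
    rewrite Sdd_lin, Sdd_L1 by auto.
    rewrite (IHm p) by (try eapply distinct_le; eauto; lia).
    rewrite (IHm (S p)) by (auto; lia).
    replace (m =? S p)%nat with false by (symmetry; apply Nat.eqb_neq; lia).
    simpl (S m =? S p)%nat. destruct (m =? p)%nat; ring.
Qed.

Lemma lagrange_exists x k c : distinct x k ->
  exists j0, (j0 <= k)%nat /\ CM (Dt x k j0) <= INR (S k) * CM (Pp c k (x j0)).
Proof.
  intros Hd.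
  destruct (classic (exists j0, (j0 <= k)%nat /\ CM (Dt x k j0) <= INR (S k) * CM (Pp c k (x j0))))
    as [H|H]; auto.
  exfalso.
  assert (Hall : forall j, (j < S k)%nat -> CM (Pp c k (x j) / Dt x k j)%C < / INR (S k)).
  { intros j Hj. assert (Dt x k j <> RtoC 0) by (apply Dt_neq0; auto; lia).
    rewrite Cmod_div by auto.
    assert (0 < CM (Dt x k j)) by (apply Cmod_gt_0; auto).
    assert (0 < INR (S k)) by (apply lt_0_INR; lia).
    destruct (Rlt_dec (CM (Pp c k (x j)) / CM (Dt x k j)) (/ INR (S k))) as [Hl|Hl]; auto.
    exfalso. apply H. exists j. split; [lia|].
    apply Rnot_lt_le in Hl.
    apply (Rmult_le_compat_l (INR (S k) * CM (Dt x k j))) in Hl; [|nra].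
    replace (INR (S k) * CM (Dt x k j) * / INR (S k)) with (CM (Dt x k j)) in Hl by (field; lra).
    replace (INR (S k) * CM (Dt x k j) * (CM (Pp c k (x j)) / CM (Dt x k j)))
      with (INR (S k) * CM (Pp c k (x j))) in Hl by (field; lra).
    exact Hl. }
  pose proof (Sdd_Pp k k x c (le_n k) Hd) as E. rewrite Nat.eqb_refl in E.
  unfold Sdd in E.
  pose proof (Cmod_Csum_le (S k) (fun j => Pp c k (x j) / Dt x k j)%C) as Hle.
  pose proof (Rsum_lt (S k) (fun i => CM (Pp c k (x i) / Dt x k i)%C) (/ INR (S k)) ltac:(lia) Hall) as Hlt.
  change (CM (Csum (S k) (fun j => (Pp c k (x j) / Dt x k j)%C) : C) <= Rsum (S k) (fun i => CM (Pp c k (x i) / Dt x k i)%C)) in Hle.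
  rewrite E, Cmod_1 in Hle.
  assert (0 < INR (S k)) by (apply lt_0_INR; lia).
  replace (INR (S k) * / INR (S k)) with 1 in Hlt by (field; lra). lra.
Qed.

Lemma Int_part_bounds r : IZR (Int_part r) <= r < IZR (Int_part r) + 1.
Proof. destruct (base_Int_part r). lra. Qed.

Lemma Int_part_range r (h : nat) : 1 <= r -> r < INR h + 1 ->
  (1 <= Int_part r <= Z.of_nat h)%Z.
Proof.
  intros H1 H2. destruct (Int_part_bounds r) as [A B]. split.
  - apply le_IZR. apply Rnot_lt_le. intro C.
    assert (Int_part r <= 0)%Z by (apply Z.lt_succ_r; apply lt_IZR; rewrite succ_IZR; lra).
    apply IZR_le in H. lra.
  - apply Z.lt_succ_r. apply lt_IZR. rewrite succ_IZR, <- INR_IZR_INZ. lra.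
Qed.

Definition gsgn (d : R) (v : R) : Z :=
  if Rle_dec 0 v then Int_part (v / d) else (- Int_part (- v / d))%Z.

Lemma gsgn_pos d v : 0 <= v -> gsgn d v = Int_part (v / d).
Proof. intros H. unfold gsgn. destruct (Rle_dec 0 v); [reflexivity|lra]. Qed.
Lemma gsgn_neg d v : v < 0 -> gsgn d v = (- Int_part (- v / d))%Z.
Proof. intros H. unfold gsgn. destruct (Rle_dec 0 v); [lra|reflexivity]. Qed.

Lemma pigeon_exists (n : nat) (y : nat -> R) (d : R) : 0 < d ->
  (forall m, (m < S n)%nat -> d <= Rabs (y m)) ->
  (forall m m', (m < S n)%nat -> (m' < S n)%nat -> m <> m' -> d <= Rabs (y m - y m')) ->
  exists m, (m < S n)%nat /\ (INR (n / 2) + 1) * d <= Rabs (y m).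
Proof.
  intros Hd H1 H2. set (h := (n / 2)%nat).
  destruct (classic (exists m, (m < S n)%nat /\ (INR h + 1) * d <= Rabs (y m))) as [E|E]; auto.
  exfalso.
  assert (Hlt : forall m, (m < S n)%nat -> Rabs (y m) < (INR h + 1) * d).
  { intros m Hm. apply Rnot_le_lt. intro C. apply E. exists m. auto. }
  assert (Hr : forall m, (m < S n)%nat ->
     (0 <= y m -> 1 <= y m / d < INR h + 1) /\ (y m < 0 -> 1 <= - y m / d < INR h + 1)).
  { intros m Hm. specialize (H1 m Hm). specialize (Hlt m Hm). split; intros Hs.
    - rewrite Rabs_right in H1, Hlt by lra. split.
      + apply (Rmult_le_reg_r d); auto. unfold Rdiv. rewrite Rmult_assoc, Rinv_l, Rmult_1_r; lra.
      + apply (Rmult_lt_reg_r d); auto. unfold Rdiv. rewrite Rmult_assoc, Rinv_l, Rmult_1_r; lra.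
    - rewrite Rabs_left in H1, Hlt by lra. split.
      + apply (Rmult_le_reg_r d); auto. unfold Rdiv. rewrite Rmult_assoc, Rinv_l, Rmult_1_r; lra.
      + apply (Rmult_lt_reg_r d); auto. unfold Rdiv. rewrite Rmult_assoc, Rinv_l, Rmult_1_r; lra. }
  set (g := fun m => gsgn d (y m)).
  assert (Hg : forall m, (m < S n)%nat ->
     (0 <= y m /\ (1 <= g m <= Z.of_nat h)%Z) \/ (y m < 0 /\ (- Z.of_nat h <= g m <= -1)%Z)).
  { intros m Hm. unfold g. destruct (Rle_dec 0 (y m)) as [Hs|Hs].
    - left. split; auto. rewrite gsgn_pos by auto. destruct (Hr m Hm) as [Hp _]. destruct (Hp Hs). apply Int_part_range; auto.
    - right. split; [lra|]. rewrite gsgn_neg by lra. destruct (Hr m Hm) as [_ Hp]. destruct (Hp ltac:(lra)) as [Ha Hb].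
      pose proof (Int_part_range (- y m / d) h Ha Hb); lia. }
  assert (Hinj : forall m m', (m < S n)%nat -> (m' < S n)%nat -> g m = g m' -> m = m').
  { intros m m' Hm Hm' Eg. destruct (Nat.eq_dec m m') as [|Hne]; auto. exfalso.
    pose proof (H2 m m' Hm Hm' Hne) as Hsep.
    assert (Hclose : Rabs (y m / d - y m' / d) < 1).
    { destruct (Hg m Hm) as [[s1 b1]|[s1 b1]], (Hg m' Hm') as [[s2 b2]|[s2 b2]]; try lia.
      - unfold g in Eg. rewrite !gsgn_pos in Eg by auto.
        destruct (Int_part_bounds (y m / d)), (Int_part_bounds (y m' / d)).
        rewrite Eg in *. apply Rabs_def1; lra.
      - unfold g in Eg. rewrite !gsgn_neg in Eg by auto.
        assert (Eg' : Int_part (- y m / d) = Int_part (- y m' / d)) by lia.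
        destruct (Int_part_bounds (- y m / d)), (Int_part_bounds (- y m' / d)).
        rewrite Eg' in *. unfold Rdiv in *. apply Rabs_def1; lra. }
    replace (y m / d - y m' / d) with ((y m - y m') / d) in Hclose by (field; lra).
    unfold Rdiv in Hclose. rewrite Rabs_mult, (Rabs_right (/ d)) in Hclose
      by (apply Rle_ge, Rlt_le, Rinv_0_lt_compat; lra).
    apply (Rmult_lt_compat_r d) in Hclose; auto.
    rewrite Rmult_assoc, Rinv_l, Rmult_1_r in Hclose by lra. lra. }
  set (L := map g (seq 0 (S n))).
  set (L' := map Z.of_nat (seq 1 h) ++ map (fun i => (- Z.of_nat i)%Z) (seq 1 h)).
  assert (ND : NoDup L).
  { apply NoDup_map_NoDup_ForallPairs; [|apply seq_NoDup].
    intros a b Ha Hb. apply in_seq in Ha, Hb. apply Hinj; lia. }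
  assert (INC : incl L L').
  { intros z Hz. unfold L in Hz. apply in_map_iff in Hz. destruct Hz as [m [Em Hm]].
    apply in_seq in Hm. subst z. unfold L'. apply in_or_app.
    destruct (Hg m ltac:(lia)) as [[_ Hb]|[_ Hb]].
    - left. apply in_map_iff. exists (Z.to_nat (g m)). split; [lia|]. apply in_seq. lia.
    - right. apply in_map_iff. exists (Z.to_nat (- g m)). split; [lia|]. apply in_seq. lia. }
  pose proof (NoDup_incl_length ND INC) as Hlen.
  unfold L, L' in Hlen. rewrite length_app, !length_map, !length_seq in Hlen.
  assert (2 * h <= n)%nat by (unfold h; apply Nat.Div0.mul_div_le). lia.
Qed.

Lemma Rprod_pick N f m : (m < N)%nat ->
  Rprod N f = f m * Rprod N (fun j => if (j =? m)%nat then 1 else f j).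
Proof.
  induction N; intros Hm; [lia|]. simpl.
  destruct (Nat.eq_dec m N) as [->|Hne].
  - rewrite Nat.eqb_refl.
    rewrite (Rprod_ext N (fun j => if (j =? N)%nat then 1 else f j) f); [ring|].
    intros i Hi. replace (i =? N)%nat with false by (symmetry; apply Nat.eqb_neq; lia). reflexivity.
  - rewrite IHN by lia. replace (N =? m)%nat with false by (symmetry; apply Nat.eqb_neq; lia). ring.
Qed.

Definition Zc (n : nat) : R := INR (fact (n / 2)) * INR (fact ((n + 1) / 2)).

Lemma Zc_S n : Zc (S n) = Zc n * (INR (n / 2) + 1).
Proof.
  unfold Zc.
  replace (S n / 2)%nat with ((n + 1) / 2)%nat by (f_equal; lia).
  replace ((S n + 1) / 2)%nat with (S (n / 2)) by
    (replace (S n + 1)%nat with (n + 1 * 2)%nat by lia; rewrite Nat.div_add by lia; lia).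
  change (fact (S (n / 2))) with (S (n / 2) * fact (n / 2))%nat.
  rewrite mult_INR, S_INR. ring.
Qed.

Lemma prod_sep_lb n : forall (y : nat -> R) (d : R), 0 < d ->
  (forall m, (m < n)%nat -> d <= Rabs (y m)) ->
  (forall m m', (m < n)%nat -> (m' < n)%nat -> m <> m' -> d <= Rabs (y m - y m')) ->
  Zc n * d ^ n <= Rprod n (fun m => Rabs (y m)).
Proof.
  induction n; intros y d Hd H1 H2.
  - unfold Zc. simpl. lra.
  - destruct (pigeon_exists n y d Hd H1 H2) as [ms [Hms Hbig]].
    rewrite (Rprod_pick (S n) _ ms Hms).
    rewrite <- Rprod_skip by lia.
    assert (IH : Zc n * d ^ n <= Rprod n (fun m => Rabs (y (skip ms m)))).
    { apply IHn; auto.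
      - intros m Hm. apply H1. pose proof (skip_le ms m n Hm). lia.
      - intros m m' Hm Hm' Hne. apply H2.
        + pose proof (skip_le ms m n Hm). lia.
        + pose proof (skip_le ms m' n Hm'). lia.
        + intro E. apply Hne. eapply skip_inj; eauto. }
    rewrite Zc_S. simpl pow.
    assert (0 <= Zc n * d ^ n).
    { unfold Zc. apply Rmult_le_pos; [apply Rmult_le_pos; apply pos_INR| apply pow_le; lra]. }
    assert (0 <= INR (n/2)) by apply pos_INR.
    replace (Zc n * (INR (n / 2) + 1) * (d * d ^ n)) with (((INR (n / 2) + 1) * d) * (Zc n * d ^ n)) by ring.
    apply Rmult_le_compat; auto. nra.
Qed.

Lemma div2_q a q rm : (rm < 2)%nat -> a = (2 * q + rm)%nat -> (a / 2)%nat = q.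
Proof. intros H E. symmetry. apply (Nat.div_unique a 2 q rm); lia. Qed.

Lemma odd_t a r : a = (2 * r + 1)%nat -> Nat.odd a = true.
Proof. intros ->. apply Nat.odd_spec. exists r. lia. Qed.
Lemma odd_f a r : a = (2 * r)%nat -> Nat.odd a = false.
Proof.
  intros ->. destruct (Nat.odd (2 * r)) eqn:E; auto. exfalso.
  apply Nat.odd_spec in E. destruct E as [m Hm]. lia.
Qed.

Lemma zeta_Zc k : zeta (k + 1) = Zc k.
Proof.
  unfold zeta, Zc. destruct (Nat.Even_or_Odd k) as [[r Hr]|[r Hr]].
  - rewrite (odd_t (k+1) r) by lia.
    rewrite (div2_q (k + 1 - 1) r 0), (div2_q k r 0), (div2_q (k+1) r 1) by lia. simpl. ring.
  - rewrite (odd_f (k+1) (r+1)) by lia.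
    rewrite (div2_q (k + 1) (r+1) 0), (div2_q (k + 1 - 2) r 0), (div2_q k r 1) by lia. ring.
Qed.

Lemma zeta_xi k : (1 <= k)%nat -> INR (S k) * xi k <= Zc k.
Proof.
  intros Hk. unfold xi, Zc. destruct (Nat.Even_or_Odd k) as [[r Hr]|[r Hr]].
  - replace (k =? 1)%nat with false by (symmetry; apply Nat.eqb_neq; lia).
    rewrite (odd_f k r) by lia.
    destruct r as [|r']; [lia|].
    rewrite (div2_q (k - 2) r' 0), (div2_q k (S r') 0), (div2_q (k+1) (S r') 1) by lia.
    change (fact (S r')) with (S r' * fact r')%nat. rewrite mult_INR, !S_INR.
    replace (INR (S k)) with (2 * INR r' + 3) by (replace (S k) with (2 * r' + 3)%nat by lia; rewrite plus_INR, mult_INR; simpl; ring).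
    assert (0 <= INR (fact r')) by apply pos_INR. assert (0 <= INR r') by apply pos_INR.
    assert (0 <= INR (fact r') * INR (fact r')) by nra.
    set (F := INR (fact r')) in *. simpl. replace (INR k) with (2 * INR r' + 2) by (rewrite Hr; replace (2 * S r')%nat with (r' + r' + 2)%nat by lia; rewrite !plus_INR; simpl (INR 2); ring).
    assert ((2*INR r'+3)/4 <= (INR r'+1)*(INR r'+1)) by nra. nra.
  - destruct r as [|r'].
    + subst k. simpl. lra.
    + replace (k =? 1)%nat with false by (symmetry; apply Nat.eqb_neq; lia).
      rewrite (odd_t k (S r')) by lia.
      rewrite (div2_q (k - 1) (S r') 0), (div2_q (k - 3) r' 0), (div2_q k (S r') 1),
        (div2_q (k+1) (S (S r')) 0) by lia.
      change (fact (S (S r'))) with (S (S r') * (S r' * fact r'))%nat.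
      change (fact (S r')) with (S r' * fact r')%nat.
      rewrite !mult_INR, !S_INR.
      replace (INR (S k)) with (2 * INR r' + 4) by (replace (S k) with (2 * r' + 4)%nat by lia; rewrite plus_INR, mult_INR; simpl; ring).
      assert (0 <= INR (fact r')) by apply pos_INR. assert (0 <= INR r') by apply pos_INR.
      assert (0 <= INR (fact r') * INR (fact r')) by nra.
      set (F := INR (fact r')) in *. simpl. replace (INR k) with (2 * INR r' + 3) by (rewrite Hr; replace (2 * S r' + 1)%nat with (r' + r' + 3)%nat by lia; rewrite !plus_INR; simpl (INR 3); ring).
      assert (E: (2 * INR r' + 3 + 1) * ((INR r' + 1) * F * F / 4) = ((INR r' + 2)/2) * (INR r' + 1) * (F*F)) by field. rewrite E.
      assert (0 <= (INR r'+1) * (F*F)) by nra. nra.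
Qed.

Lemma Cmod_Cexpi t : CM (Cexpi t) = 1.
Proof.
  unfold CM, Cexpi. simpl. replace (cos t * (cos t * 1) + sin t * (sin t * 1)) with 1. apply sqrt_1.
  pose proof (sin2_cos2 t). unfold Rsqr in H. nra.
Qed.

Lemma Pp_ext r r' n z : (forall i, (i < n)%nat -> r i = r' i) -> Pp r n z = Pp r' n z.
Proof.
  induction n; intros H; simpl; [reflexivity|]. rewrite IHn, H; auto; intros; apply H; lia.
Qed.

Lemma Dit_mv r n s N t (a : nat -> C) :
  Dit r n (fun l => (mat_vec s N t a l : C)) 0 = (Csum N (fun j => Pp r n (Cexpi (t j)) * a j)%C : C).
Proof.
  change (fun l => (mat_vec s N t a l : C)) with
    (fun l => (Csum N (fun j => (fun j l => (Cpow (Cexpi (t j)) l : C) * a j)%C j l) : C)).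
  rewrite Dit_Csum. apply Csum_ext. intros j Hj. rewrite Dit_pow, Cpow_0. ring.
Qed.

Lemma skip_inv j0 k j : (j0 <= k)%nat -> (j <= k)%nat -> j <> j0 ->
  exists m, (m < k)%nat /\ skip j0 m = j.
Proof.
  intros H1 H2 H3. destruct (Nat.ltb_spec j j0).
  - exists j. split; [lia|]. unfold skip. replace (j <? j0)%nat with true by (symmetry; apply Nat.ltb_lt; lia). reflexivity.
  - exists (j - 1)%nat. split; [lia|]. unfold skip. replace (j - 1 <? j0)%nat with false by (symmetry; apply Nat.ltb_ge; lia). lia.
Qed.

Lemma Cmod_le_norm2 s (v : nat -> C) l : (l <= s)%nat -> CM (v l) <= norm2 s v.
Proof.
  intros Hl. unfold norm2.
  assert (Hs : CM (v l) ^ 2 <= Rsum (S s) (fun l => Defs.Cmod (v l) ^ 2)).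
  { apply (Rsum_ge_term (S s) (fun l => Defs.Cmod (v l) ^ 2) l); [|lia].
    intros. apply pow_le. apply Cmod_ge_0. }
  rewrite <- (sqrt_pow2 (CM (v l))) by apply Cmod_ge_0.
  apply sqrt_le_1_alt. exact Hs.
Qed.

Theorem theorem3p2 (k : nat) (theta : nat -> R) (a : nat -> Cpx)
  (theta_min m_min : R) :
  (1 <= k)%nat ->
  (forall j, (j <= k)%nat -> - (PI / 2) <= theta j <= PI / 2) ->
  (forall p j, (p <= k)%nat -> (j <= k)%nat -> p <> j -> theta p <> theta j) ->
  (forall p j, (p <= k)%nat -> (j <= k)%nat -> p <> j ->
       theta_min <= Rabs (theta p - theta j)) ->
  (exists p j, (p <= k)%nat /\ (j <= k)%nat /\ p <> j /\
       theta_min = Rabs (theta p - theta j)) ->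
  0 < m_min ->
  (forall j, (j <= k)%nat -> m_min <= Cmod (a j)) ->
  forall (q : nat), (1 <= q)%nat -> (q <= k)%nat ->
  forall (thetah : nat -> R) (ah : nat -> Cpx),
    norm2 (2 * k)
      (fun l => Cadd (mat_vec (2 * k) q thetah ah l)
                     (Copp (mat_vec (2 * k) (S k) theta a l)))
    >= zeta (k + 1) * xi k * m_min * theta_min ^ (2 * k) / PI ^ (2 * k).
Proof.
  intros Hk Hth Hdist Hmin Hex Hm Ha q Hq1 Hqk thetah ah.
  set (e := fun j => Cexpi (theta j)).
  assert (Htm : 0 < theta_min).
  { destruct Hex as [p [j [Hp [Hj [Hpj E]]]]]. rewrite E. apply Rabs_pos_lt.
    specialize (Hdist p j Hp Hj Hpj). lra. }
  assert (Hpi : forall i j, (i <= k)%nat -> (j <= k)%nat -> Rabs (theta i - theta j) <= PI).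
  { intros i j Hi Hj. destruct (Hth i Hi), (Hth j Hj). apply Rabs_le; lra. }
  assert (HPI : 0 < PI) by apply PI_RGT_0.
  assert (Hchord : forall i j, (i <= k)%nat -> (j <= k)%nat ->
             2 * Rabs (theta i - theta j) / PI <= CM (e i - e j)%C).
  { intros i j Hi Hj. apply chord_lb; auto. }
  assert (Hd : distinct e k).
  { intros i j Hi Hj Hij E. pose proof (Hchord i j Hi Hj) as Hc. rewrite E in Hc.
    replace (e j - e j)%C with (RtoC 0) in Hc by ring. rewrite Cmod_0 in Hc.
    assert (0 < Rabs (theta i - theta j)) by (apply Rabs_pos_lt; specialize (Hdist i j Hi Hj Hij); lra).
    assert (0 < 2 * Rabs (theta i - theta j) / PI) by (apply Rdiv_lt_0_compat; lra). lra. }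
  set (c := fun i => if (i <? q)%nat then Cexpi (thetah i) else RtoC 1).
  destruct (lagrange_exists e k c Hd) as [j0 [Hj0 HL]].
  set (r := fun i => if (i <? k)%nat then c i else e (skip j0 (i - k))).
  assert (Hr1 : forall i, CM (r i) = 1).
  { intros i. unfold r, c, e. destruct (i <? k)%nat; [destruct (i <? q)%nat|]; 
      try apply Cmod_Cexpi; apply Cmod_1. }
  match goal with |- norm2 _ ?F >= _ => set (V := F) end.
  assert (Hbound : CM (Dit r (2*k) V 0) <= 2^(2*k) * norm2 (2*k) V).
  { apply (Dit_bound r (2*k) V (2*k)); [intros; apply Hr1 | intros; apply Cmod_le_norm2; auto | lia]. }
  assert (Hval : Dit r (2*k) V 0 = (RtoC 0 - Pp r (2*k) (e j0) * a j0)%C).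
  { change V with (fun l => ((mat_vec (2*k) q thetah ah l : C) - (mat_vec (2*k) (S k) theta a l : C))%C).
    rewrite Dit_sub, !Dit_mv.
    rewrite (Csum_zero q).
    2:{ intros j Hj. rewrite (Pp_zero r (2*k) _ j); [ring|lia|].
        unfold r, c. replace (j <? k)%nat with true by (symmetry; apply Nat.ltb_lt; lia).
        replace (j <? q)%nat with true by (symmetry; apply Nat.ltb_lt; lia). reflexivity. }
    rewrite (Csum_single (S k) _ j0); [reflexivity|lia|].
    intros j Hj Hne. destruct (skip_inv j0 k j) as [m [Hm' Hs]]; try lia.
    rewrite (Pp_zero r (2*k) _ (k + m)); [ring|lia|].
    unfold r. replace (k + m <? k)%nat with false by (symmetry; apply Nat.ltb_ge; lia).
    replace (k + m - k)%nat with m by lia. rewrite Hs. reflexivity. }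
  assert (Hsplit : Pp r (2*k) (e j0) = (Pp c k (e j0) * Dt e k j0)%C).
  { replace (2*k)%nat with (k+k)%nat by lia. rewrite Pp_add. f_equal.
    - apply Pp_ext. intros i Hi. unfold r.
      replace (i <? k)%nat with true by (symmetry; apply Nat.ltb_lt; lia). reflexivity.
    - rewrite Pp_Cprod. unfold Dt. rewrite <- (Cprod_skip k j0 (fun j => e j0 - e j)%C) by lia.
      apply Cprod_ext. intros m Hm'. unfold r.
      replace (k + m <? k)%nat with false by (symmetry; apply Nat.ltb_ge; lia).
      replace (k + m - k)%nat with m by lia. reflexivity. }
  assert (HD : CM (Dt e k j0) = Rprod k (fun m => CM (e j0 - e (skip j0 m))%C)).
  { unfold Dt. rewrite <- (Cprod_skip k j0 (fun j => e j0 - e j)%C) by lia. apply Cmod_Cprod. }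
  set (R0 := Rprod k (fun m => Rabs (theta (skip j0 m) - theta j0))).
  assert (HR0 : Zc k * theta_min ^ k <= R0).
  { apply (prod_sep_lb k (fun m => theta (skip j0 m) - theta j0)); auto.
    - intros m Hm'. apply Hmin; [apply (skip_le j0 m k Hm')| lia| apply skip_neq].
    - intros m m' Hm1 Hm2 Hne.
      replace (theta (skip j0 m) - theta j0 - (theta (skip j0 m') - theta j0))
        with (theta (skip j0 m) - theta (skip j0 m')) by ring.
      apply Hmin; [apply (skip_le j0 m k Hm1)| apply (skip_le j0 m' k Hm2)|].
      intro E. apply Hne. eapply skip_inj; eauto. }
  assert (HDlb : (2 / PI) ^ k * R0 <= CM (Dt e k j0)).
  { rewrite HD. unfold R0. rewrite <- Rprod_const, <- Rprod_mult.
    apply Rprod_le. intros m Hm'. split.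
    - apply Rmult_le_pos; [apply Rlt_le, Rdiv_lt_0_compat; lra| apply Rabs_pos].
    - pose proof (Hchord j0 (skip j0 m) Hj0 (skip_le j0 m k Hm')) as Hc.
      rewrite Rabs_minus_sym in Hc. unfold Rdiv in *. lra. }
  set (N := norm2 (2 * k) V) in *.
  set (Q := CM (Pp c k (e j0))) in *.
  set (D := CM (Dt e k j0)) in *.
  set (A := CM (a j0)).
  assert (H1 : Q * D * A <= 2 ^ (2 * k) * N).
  { rewrite Hval, Hsplit in Hbound.
    replace (RtoC 0 - Pp c k (e j0) * Dt e k j0 * a j0)%C with (- (Pp c k (e j0) * Dt e k j0 * a j0))%C in Hbound by ring.
    rewrite Cmod_opp, !Cmod_mult in Hbound. exact Hbound. }
  assert (HA : m_min <= A) by (apply Ha; auto).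
  assert (HQ0 : 0 <= Q) by apply Cmod_ge_0.
  assert (HD0 : 0 <= D) by apply Cmod_ge_0.
  pose proof (zeta_xi k Hk) as Hzx. rewrite zeta_Zc.
  assert (HZ0 : 0 <= Zc k) by (unfold Zc; apply Rmult_le_pos; apply pos_INR).
  set (Z := Zc k) in *.
  set (X := xi k) in *.
  assert (HK : 0 < INR (S k)) by (apply lt_0_INR; lia).
  set (K := INR (S k)) in *.
  set (T := theta_min ^ k) in *.
  assert (HT : 0 <= T) by (apply pow_le; lra).
  set (P := PI ^ k).
  assert (HP : 0 < P) by (apply pow_lt; lra).
  set (W := 2 ^ k).
  assert (HW : 0 < W) by (apply pow_lt; lra).
  assert (E1 : theta_min ^ (2 * k) = T * T) by (unfold T; rewrite <- pow_add; f_equal; lia).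
  assert (E2 : PI ^ (2 * k) = P * P) by (unfold P; rewrite <- pow_add; f_equal; lia).
  assert (E3 : (2:R) ^ (2 * k) = W * W) by (unfold W; rewrite <- pow_add; f_equal; lia).
  assert (E4 : (2 / PI) ^ k = W / P) by (unfold W, P, Rdiv; rewrite Rpow_mult_distr, pow_inv; reflexivity).
  rewrite E1, E2. rewrite E3 in H1. rewrite E4 in HDlb.
  assert (HX : K * X <= Z) by exact Hzx.
  assert (H2 : m_min * (D * D) <= K * (W * W) * N).
  { assert (D * D * m_min <= K * Q * D * A).
    { assert (D * D <= K * Q * D) by nra. nra. }
    nra. }
  assert (HG : W / P * (Z * T) <= D).
  { eapply Rle_trans; [|exact HDlb]. apply Rmult_le_compat_l; [|exact HR0].
    apply Rlt_le, Rdiv_lt_0_compat; lra. }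
  assert (HG0 : 0 <= W / P * (Z * T)) by (apply Rmult_le_pos; [apply Rlt_le, Rdiv_lt_0_compat; lra| nra]).
  assert (H3 : m_min * ((W / P * (Z * T)) * (W / P * (Z * T))) <= K * (W * W) * N).
  { eapply Rle_trans; [|exact H2]. apply Rmult_le_compat_l; [lra|]. nra. }
  replace (m_min * ((W / P * (Z * T)) * (W / P * (Z * T)))) with
    ((W * W) * (m_min * (Z * Z) * (T * T) / (P * P))) in H3 by (field; lra).
  assert (H4 : m_min * (Z * Z) * (T * T) / (P * P) <= K * N).
  { apply (Rmult_le_reg_l (W * W)); [nra|]. lra. }
  apply Rle_ge.
  assert (H5 : K * (Z * X * m_min * (T * T) / (P * P)) <= m_min * (Z * Z) * (T * T) / (P * P)).
  { replace (K * (Z * X * m_min * (T * T) / (P * P))) with ((K * X) * (Z * m_min * (T * T) / (P * P))) by (field; lra).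
    replace (m_min * (Z * Z) * (T * T) / (P * P)) with (Z * (Z * m_min * (T * T) / (P * P))) by (field; lra).
    apply Rmult_le_compat_r; [|exact HX].
    apply Rmult_le_pos; [|apply Rlt_le, Rinv_0_lt_compat; nra].
    apply Rmult_le_pos; [nra|nra]. }
  apply (Rmult_le_reg_l K); [exact HK|]. lra.
Qed.
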